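(* If $\sigma\in\operatorname{Aut}(\mathcal{H}_N)$, then $\sigma(\mathcal{H}_N')=\mathcal{H}_N'$ and $\sigma(\mathfrak h)=\mathfrak h$.
   Context: $\mathbb{K}$ is an algebraically closed field of characteristic zero, $N=2m\ge2$ even, $(\cdot,\cdot)$ the bilinear form on $\mathbb{K}^N$ with $(e_i,e_j)=\delta_{ij}$. Let $A_N=\mathbb{K}[t_1^{\pm1},\dots,t_N^{\pm1}]$, $d_i=t_i\frac{\partial}{\partial t_i}$, $t^{\bm r}=t_1^{r_1}\cdots t_N^{r_N}$, $D(u,\bm r)=\sum_i u_it^{\bm r}d_i$. Let $\bm J=\begin{pmatrix} O_m & I_m\\ -I_m & O_m\end{pmatrix}$, $\overline{\bm r}=\bm J\bm r$, $h_{\bm r}=D(\overline{\bm r},\bm r)$, $\mathfrak h=\operatorname{span}_{\mathbb{K}}\{d_1,\dots,d_N\}=\{D(u,\bm0):u\in\mathbb{K}^N\}$. The Hamiltonian Lie algebra is $\mathcal{H}_N=\operatorname{span}_{\mathbb{K}}\{h_{\bm r}:\bm r\ne\bm0\}\oplus\mathfrak h$ with commutator bracket ($[h_{\bm r},h_{\bm s}]=(\overline{\bm r},\bm s)h_{\bm r+\bm s}$, $[D(u,\bm0),h_{\bm r}]=(u,\bm r)h_{\bm r}$), and $\mathcal{H}_N'=[\mathcal{H}_N,\mathcal{H}_N]=\operatorname{span}_{\mathbb{K}}\{h_{\bm r}:\bm r\ne\bm0\}$. *)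

(* Defs.v *)
From HB Require Import structures.
From mathcomp Require Import all_boot all_order all_algebra.
From mathcomp Require Import finmap.
From mathcomp.multinomials Require Import monalg.

Set Implicit Arguments.
Unset Strict Implicit.
Unset Printing Implicit Defensive.

Import Order.TTheory GRing.Theory Num.Theory.
Local Open Scope ring_scope.

(* N = 2m = m + m.  Elements of Z^N are row vectors 'rV[int]_(m+m),
   elements of K^N are row vectors 'rV[K]_(m+m). *)

Definition bform (R : pzRingType) (n : nat) (u v : 'rV[R]_n) : R :=
  \sum_(i < n) u 0 i * v 0 i.

Definition Jmx (m : nat) : 'M[int]_(m + m) :=
  block_mx 0 1%:M (- 1%:M) 0.

(* rbar = J r  (r written as a row vector, so J r is r *m J^T) *)
Definition rbar (m : nat) (r : 'rV[int]_(m + m)) : 'rV[int]_(m + m) :=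
  r *m (Jmx m)^T.

Definition rK (K : pzRingType) (n : nat) (r : 'rV[int]_n) : 'rV[K]_n :=
  map_mx (fun z : int => z%:~R) r.

Definition nzkey (m : nat) := {r : 'rV[int]_(m + m) | r != 0}.

(* The Hamiltonian Lie algebra H_N, realised on its basis
   {h_r : r <> 0} U {d_1, ..., d_N}:
   an element is a pair (f, u) standing for
      sum_{r} f_r h_r  +  D(u, 0).
   The first component is a finitely supported K-valued function on
   nonzero r (coordinates w.r.t. the h_r), the second one u in K^N. *)
Definition HN (K : fieldType) (m : nat) : lmodType K :=
  ({malg K[nzkey m]} * 'rV[K]_(m + m))%type.

(* the basis element h_r, with the convention h_0 = D(J 0, 0) = 0 *)
Definition hpart (K : fieldType) (m : nat) (r : 'rV[int]_(m + m))
    : {malg K[nzkey m]} :=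
  if insub r is Some k then << (k : nzkey m) >> else 0.

(* The Lie bracket, extended bilinearly from
     [h_r, h_s] = (rbar, s) h_{r+s},
     [D(u,0), h_r] = (u, r) h_r,  [D(u,0), D(v,0)] = 0. *)
Definition HNbr (K : fieldType) (m : nat) (x y : HN K m) : HN K m :=
  let f := x.1 in let u := x.2 in let g := y.1 in let v := y.2 in
  (\sum_(a <- msupp f) \sum_(b <- msupp g)
      (f@_a * g@_b * (bform (rbar (val a)) (val b))%:~R)
        *: hpart K (val a + val b)
   + \sum_(b <- msupp g) (g@_b * bform u (rK K (val b))) *: << b >>
   - \sum_(a <- msupp f) (f@_a * bform v (rK K (val a))) *: << a >>,
   0).

(* H_N' = span{h_r : r <> 0} *)
Definition HNder (K : fieldType) (m : nat) : pred (HN K m) :=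
  [pred x | x.2 == 0].

(* the Cartan subalgebra h = span{d_1, ..., d_N} = {D(u,0)} *)
Definition HNcartan (K : fieldType) (m : nat) : pred (HN K m) :=
  [pred x | x.1 == 0].

Definition is_HN_aut (K : fieldType) (m : nat) (sigma : HN K m -> HN K m) : Prop :=
  [/\ linear sigma, bijective sigma &
      forall x y, sigma (HNbr x y) = HNbr (sigma x) (sigma y)].

Definition maps_onto (T : Type) (sigma : T -> T) (A : pred T) : Prop :=
  (forall x, A x -> A (sigma x)) /\ (forall y, A y -> exists2 x, A x & sigma x = y).

(* Main.v *)
Require Import Defs.
From HB Require Import structures.
From mathcomp Require Import all_boot all_order all_algebra.
From mathcomp Require Import finmap.
From mathcomp.multinomials Require Import monalg.
Set Implicit Arguments. Unset Strict Implicit. Unset Printing Implicit Defensive.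
Import Order.TTheory GRing.Theory Num.Theory.
Local Open Scope ring_scope.
Lemma intr_neq0_char0 (K : fieldType) (charK0 : [pchar K] =i pred0) (z : int) :
  z != 0 -> (z%:~R : K) != 0.
Proof.
have H := (pcharf0P K).1 charK0.
case: z => [k|k] /= hk.
  by rewrite -pmulrn H.
by rewrite NegzE mulrNz oppr_eq0 -pmulrn H.
Qed.
Lemma bform_rK (K : fieldType) n (a b : 'rV[int]_n) :
  bform (rK K a) (rK K b) = (bform a b)%:~R.
Proof.
rewrite /bform (raddf_sum (intr : int -> K)) /=; apply: eq_bigr => i _.
by rewrite !mxE rmorphM.
Qed.
Lemma bformZl (K : fieldType) n c (a b : 'rV[K]_n) :
  bform (c *: a) b = c * bform a b.
Proof. by rewrite /bform mulr_sumr; apply: eq_bigr => i _; rewrite mxE mulrA. Qed.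
Lemma bform_self_neq0 n (a : 'rV[int]_n) : a != 0 -> bform a a != 0.
Proof.
move=> a0; rewrite /bform psumr_eq0; last by move=> i _; by rewrite -expr2 sqr_ge0.
apply/negP => /allP H; case/eqP: a0; apply/matrixP => i j.
rewrite ord1 mxE; have := H j (mem_index_enum _).
by rewrite mulf_eq0 orbb => /eqP.
Qed.
Lemma malgU_scale (K : fieldType) (T : choiceType) (c : K) (k : T) : << c *g k >> = c *: << k >> :> {malg K[T]}.
Proof. apply/malgP => p. rewrite mcoeffZ !mcoeffU. by case: (k == p); rewrite ?mulr1 ?mulr0. Qed.

Lemma HN_add1 (K : fieldType) m (x y : HN K m) : (x + y).1 = x.1 + y.1. Proof. by []. Qed.
Lemma HN_add2 (K : fieldType) m (x y : HN K m) : (x + y).2 = x.2 + y.2. Proof. by []. Qed.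
Lemma HN_scale1 (K : fieldType) m c (x : HN K m) : (c *: x).1 = c *: x.1. Proof. by []. Qed.
Lemma HN_scale2 (K : fieldType) m c (x : HN K m) : (c *: x).2 = c *: x.2. Proof. by []. Qed.
Lemma HN_opp1 (K : fieldType) m (x : HN K m) : (- x).1 = - x.1. Proof. by []. Qed.
Lemma HN_opp2 (K : fieldType) m (x : HN K m) : (- x).2 = - x.2. Proof. by []. Qed.
Lemma HN_zero1 (K : fieldType) m : (0 : HN K m).1 = 0. Proof. by []. Qed.
Lemma HN_zero2 (K : fieldType) m : (0 : HN K m).2 = 0. Proof. by []. Qed.
Lemma HN_ext (K : fieldType) m (x y : HN K m) : x.1 = y.1 -> x.2 = y.2 -> x = y.
Proof. by case: x y => [? ?] [? ?] /= -> ->. Qed.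

Lemma bformDr (R : pzRingType) n (a b c : 'rV[R]_n) : bform a (b + c) = bform a b + bform a c.
Proof. by rewrite /bform -big_split; apply: eq_bigr => i _; rewrite mxE mulrDr. Qed.
Lemma bformNr (R : pzRingType) n (a b : 'rV[R]_n) : bform a (- b) = - bform a b.
Proof. by rewrite /bform -sumrN; apply: eq_bigr => i _; rewrite mxE mulrN. Qed.
Lemma bformMnr (R : pzRingType) n (a b : 'rV[R]_n) k : bform a (b *+ k) = bform a b *+ k.
Proof. by elim: k => [|k IH]; rewrite ?mulr0n ?mulrS ?bformDr ?IH // /bform big1 // => i _; rewrite mxE mulr0. Qed.

Lemma trJ m : (Jmx m)^T = - Jmx m.
Proof.
rewrite /Jmx tr_block_mx !trmx0 trmx1 -[(- 1%:M)^T]/(trmx (- 1%:M)) linearN /= trmx1.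
by rewrite opp_block_mx !oppr0 opprK.
Qed.

Lemma JJ m : Jmx m *m Jmx m = - 1%:M.
Proof.
rewrite /Jmx mulmx_block !mul0mx !mulmx0 !mul1mx ?mulmx1 !add0r ?addr0.
by rewrite [in RHS]scalar_mx_block opp_block_mx oppr0. Qed.

Lemma rbarK m (r : 'rV[int]_(m + m)) : rbar (rbar r) = - r.
Proof. by rewrite /rbar -mulmxA trJ mulmxN mulNmx opprK JJ mulmxN (mulmx1 r). Qed.

Lemma rbar_neq0 m (r : 'rV[int]_(m + m)) : r != 0 -> rbar r != 0.
Proof.
move=> r0; apply: contraNneq r0 => e.
by rewrite -oppr_eq0 -rbarK e /rbar mul0mx.
Qed.

Lemma bform_rbar_self m (r : 'rV[int]_(m + m)) : bform (rbar r) r = 0.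
Proof.
have E : bform (rbar r) r = \sum_i \sum_j r 0 j * (Jmx m) i j * r 0 i.
  rewrite /bform /rbar; apply: eq_bigr => i _; rewrite mxE big_distrl /=.
  by apply: eq_bigr => j _; rewrite mxE.
have : bform (rbar r) r = - bform (rbar r) r.
  rewrite [in LHS]E exchange_big /= E -sumrN; apply: eq_bigr => j _; rewrite -sumrN.
  apply: eq_bigr => i _.
  have := congr1 (fun M : 'M[int]_(m + m) => M j i) (trJ m); rewrite !mxE => ->.
  rewrite mulrN mulNr; congr (- _); by rewrite mulrAC [r 0 j * _]mulrC mulrAC.
move/eqP; rewrite -subr_eq0 opprK -mulr2n -mulr_natr mulf_eq0 /= => /orP[/eqP //|//].
Qed.
Definition rseq n (x : 'rV[int]_n) : seqlexi int := [seq x 0 i | i <- enum 'I_n].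
Definition lexle n (x y : 'rV[int]_n) : bool := (rseq x <= rseq y)%O.

Lemma lex_total n : total (@lexle n).
Proof. by move=> x y; rewrite /lexle le_total. Qed.
Lemma lex_refl n (x : 'rV[int]_n) : lexle x x.
Proof. by rewrite /lexle lexx. Qed.
Lemma lex_trans n (x y z : 'rV[int]_n) : lexle x y -> lexle y z -> lexle x z.
Proof. exact: le_trans. Qed.
Lemma lex_anti n (x y : 'rV[int]_n) : lexle x y -> lexle y x -> x = y.
Proof.
move=> h1 h2; have /eq_in_map e : rseq x = rseq y by apply: le_anti; rewrite -/(lexle x y) -/(lexle y x) h1 h2.
by apply/matrixP => i j; rewrite ord1 e // mem_enum.
Qed.
Lemma lexi_map_add (I : Type) (s : seq I) (f g c : I -> int) :
  (([seq f i | i <- s] : seqlexi int) <= [seq g i | i <- s])%O ->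
  (([seq f i + c i | i <- s] : seqlexi int) <= [seq g i + c i | i <- s])%O.
Proof.
elim: s => [//|i s IH] /=; rewrite !lexi_cons !lerD2r.
by case/andP => -> /= h; apply/implyP => /(implyP h) /IH.
Qed.
Lemma lex_add n (x y c : 'rV[int]_n) : lexle x y -> lexle (x + c) (y + c).
Proof.
have E z : [seq (z + c) 0 i | i <- enum 'I_n] = [seq z 0 i + c 0 i | i <- enum 'I_n].
  by apply: eq_map => i; rewrite mxE.
rewrite /lexle /rseq !E; exact: (lexi_map_add (fun i => c 0 i)).
Qed.
Section S.
Variables (K : fieldType) (m : nat).
Local Notation H := (HN K m).
Local Notation key := (nzkey m).

Lemma coef_sumU (s : seq key) (F : key -> K) k : uniq s ->
  (\sum_(b <- s) F b *: << b >> : {malg K[key]})@_k = if k \in s then F k else 0.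
Proof.
move=> us; rewrite raddf_sum /=.
under eq_bigr => b _ do rewrite mcoeffZ mcoeffU.
case: ifP => ks.
  rewrite (bigD1_seq k) //= eqxx mulr1n mulr1 big1 ?addr0 // => b /negbTE.
  by rewrite eq_sym => ->; rewrite mulr0n mulr0.
rewrite big1_seq // => b /andP[_ bs]; case: eqP => [e|]; last by rewrite mulr0n mulr0.
by move: ks; rewrite -e bs.
Qed.

Lemma coef_hpart (q : 'rV[int]_(m + m)) (p : key) :
  (hpart K q)@_p = (val p == q)%:R.
Proof.
rewrite /hpart; case: insubP => [k _ kq|].
  by rewrite mcoeffU -kq (inj_eq val_inj) eq_sym.
move/negbNE/eqP => ->; rewrite mcoeff0.
by case: p => /= p /negbTE ->.
Qed.

Lemma bform0l (n : nat) (v : 'rV[K]_n) : bform 0 v = 0.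
Proof. by rewrite /bform big1 // => i _; rewrite mxE mul0r. Qed.

Lemma HNbr0l u (z : H) :
  HNbr (0, u) z = (\sum_(b <- msupp z.1) (z.1@_b * bform u (rK K (val b))) *: << b >>, 0).
Proof.
by rewrite /HNbr /= msupp0 !big_nil add0r subr0.
Qed.

Lemma HNbr0l_coef u (z : H) k :
  (HNbr (0, u) z).1@_k = z.1@_k * bform u (rK K (val k)).
Proof.
rewrite HNbr0l /= coef_sumU ?fset_uniq //; case: ifP => // /negbT.
by rewrite -mcoeff_eq0 => /eqP ->; rewrite mul0r.
Qed.
Variable charK0 : [pchar K] =i pred0.

Definition hom (s : H -> H) := linear s /\ forall x y, s (HNbr x y) = HNbr (s x) (s y).

Section Lin.
Variable s : H -> H.
Hypothesis lin : linear s.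
Lemma lin0 : s 0 = 0.
Proof. have h := lin 1 0 0; rewrite !scale1r addr0 in h; apply: (@addIr _ (s 0)); by rewrite add0r -h. Qed.
Lemma linD x y : s (x + y) = s x + s y.
Proof. by have := lin 1 x y; rewrite !scale1r. Qed.
Lemma linZ c x : s (c *: x) = c *: s x.
Proof. by have := lin c x 0; rewrite !addr0 lin0 addr0. Qed.
Lemma linB x y : s (x - y) = s x - s y.
Proof. by rewrite -scaleN1r linD linZ scaleN1r. Qed.
End Lin.

Lemma inv_hom s g : hom s -> cancel s g -> cancel g s -> hom g.
Proof.
move=> [lin br] sg gs; split.
  by move=> a x y; rewrite -{1}(gs x) -{1}(gs y) -linZ // -linD // sg.
by move=> x y; rewrite -{1}(gs x) -{1}(gs y) -br sg.
Qed.

Lemma hk_bracket (k : key) :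
  ((<< k >>, 0) : H) =
  HNbr (0, (bform (rK K (val k)) (rK K (val k)))^-1 *: rK K (val k)) (<< k >>, 0).
Proof.
apply/eqP; rewrite xpair_eqE eqxx andbT; apply/eqP/malgP => p.
rewrite HNbr0l_coef /= mcoeffU; case: eqP => [<-|]; last by rewrite mul0r.
rewrite bformZl mulVf ?mulr1 // bform_rK intr_neq0_char0 // bform_self_neq0 //.
by case: k.
Qed.

Lemma der_pres s : hom s -> forall x : H, x.2 = 0 -> (s x).2 = 0.
Proof.
move=> [lin br] [f u] /= ->.
rewrite (monalgE f).
apply: (big_ind (fun g => (s (g, 0)).2 = 0)).
- by rewrite -[((0,0) : H)]/(0 : H) lin0.
- move=> g1 g2 h1 h2.
  have -> : ((g1 + g2, 0) : H) = (g1, 0) + (g2, 0).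
    apply: HN_ext => //; transitivity (0 + 0 : 'rV[K]_(m + m)); [by rewrite addr0 | by []].
  by rewrite linD // HN_add2 h1 h2 addr0.
move=> k _; rewrite malgU_scale.
have -> : ((f@_k *: << k >>, 0) : H) = f@_k *: (<< k >>, 0).
  apply: HN_ext => //; transitivity (f@_k *: 0 : 'rV[K]_(m + m)); [by rewrite scaler0 | by []].
by rewrite linZ // hk_bracket br HN_scale2 /= scaler0.
Qed.

Definition Fop (x : H) (l : K) (z : H) := HNbr x z - l *: z.
Definition LF (x : H) := forall y, exists s : seq K, foldr (Fop x) y s = 0.

Lemma LF_transport s g : hom s -> cancel g s -> forall x, LF x -> LF (s x).
Proof.
move=> [lin br] gs x LFx y; have [l hl] := LFx (g y); exists l.
have E : forall z, s (foldr (Fop x) z l) = foldr (Fop (s x)) (s z) l.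
  by move=> z; elim: l {hl} => //= a l IH; rewrite /Fop linB // linZ // br IH.
by rewrite -(gs y) -E hl lin0.
Qed.

Lemma Fop0_coef u l (w : H) k :
  (Fop (0, u) l w).1@_k = w.1@_k * (bform u (rK K (val k)) - l).
Proof. by rewrite /Fop HN_add1 HN_opp1 HN_scale1 mcoeffB mcoeffZ HNbr0l_coef mulrBr [l * _]mulrC. Qed.

Lemma Fop0_2 u l (w : H) : w.2 = 0 -> (Fop (0, u) l w).2 = 0.
Proof. by move=> w2; rewrite /Fop HN_add2 HN_opp2 HN_scale2 w2 scaler0 subr0. Qed.

Lemma foldr_cons_eq (T1 T2 : Type) (f : T1 -> T2 -> T2) z a l :
  foldr f z (a :: l) = f a (foldr f z l).
Proof. by []. Qed.

Lemma Fop0_iter u (z : H) l : z.2 = 0 ->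
  (foldr (Fop (0, u)) z l).2 = 0 /\
  forall k, (foldr (Fop (0, u)) z l).1@_k =
            z.1@_k * \prod_(a <- l) (bform u (rK K (val k)) - a).
Proof.
move=> z2; elim: l => [|a l [IH2 IH1]].
  split; first exact: z2.
  by move=> k; rewrite big_nil mulr1.
rewrite foldr_cons_eq; split; first exact: Fop0_2.
by move=> k; rewrite Fop0_coef IH1 big_cons -mulrA [X in _ * X]mulrC.
Qed.

Lemma LF_cartan u : LF (0, u).
Proof.
move=> y.
exists ([seq bform u (rK K (val k)) | k <- msupp y.1] ++ [:: 0]); rewrite foldr_cat foldr_cons_eq.
have z2 : (Fop (0, u) 0 y).2 = 0 by rewrite /Fop HN_add2 HN_opp2 HN_scale2 scale0r subr0.
have zc k : (Fop (0, u) 0 y).1@_k = y.1@_k * bform u (rK K (val k)) by rewrite Fop0_coef subr0.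
have [G2 G1] := @Fop0_iter u _ [seq bform u (rK K (val k)) | k <- msupp y.1] z2.
apply: HN_ext; last by rewrite G2 HN_zero2.
rewrite HN_zero1; apply/malgP => k; rewrite G1 zc mcoeff0.
have [kin|kout] := boolP (k \in msupp y.1); last first.
  by move: kout; rewrite -mcoeff_eq0 => /eqP ->; rewrite !mul0r.
by rewrite big_map (bigD1_seq k) ?fset_uniq //= subrr mul0r mulr0.
Qed.

Lemma HNbr2 (x z : H) : (HNbr x z).2 = 0. Proof. by []. Qed.

Lemma coef_sum_supp (f : {malg K[key]}) (F : key -> K) q :
  (\sum_(b <- msupp f) (f@_b * F b) *: << b >>)@_q = f@_q * F q.
Proof.
rewrite coef_sumU ?fset_uniq //; case: ifP => // /negbT.
by rewrite -mcoeff_eq0 => /eqP ->; rewrite mul0r.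
Qed.

Lemma HNbr1 (x z : H) : (HNbr x z).1 =
   \sum_(a <- msupp x.1) \sum_(b <- msupp z.1)
      (x.1@_a * z.1@_b * (bform (rbar (val a)) (val b))%:~R)
        *: hpart K (val a + val b)
   + \sum_(b <- msupp z.1) (z.1@_b * bform x.2 (rK K (val b))) *: << b >>
   - \sum_(a <- msupp x.1) (x.1@_a * bform z.2 (rK K (val a))) *: << a >>.
Proof. by []. Qed.

Lemma HNbr_coef (x z : H) q :
  (HNbr x z).1@_q =
  \sum_(a <- msupp x.1) \sum_(b <- msupp z.1)
     x.1@_a * z.1@_b * (bform (rbar (val a)) (val b))%:~R * (val q == val a + val b)%:R
  + z.1@_q * bform x.2 (rK K (val q)) - x.1@_q * bform z.2 (rK K (val q)).
Proof.
rewrite HNbr1 mcoeffB mcoeffD.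
congr (_ + _ - _); last by rewrite coef_sum_supp.
  2: by rewrite coef_sum_supp.
rewrite raddf_sum /=; apply: eq_bigr => a _; rewrite raddf_sum /=; apply: eq_bigr => b _.
by rewrite mcoeffZ coef_hpart.
Qed.

Lemma Fop_coef (x w : H) a q : (Fop x a w).1@_q = (HNbr x w).1@_q - a * w.1@_q.
Proof. by rewrite /Fop HN_add1 HN_opp1 HN_scale1 mcoeffB mcoeffZ. Qed.

Lemma Fop_2 (x w : H) a : w.2 = 0 -> (Fop x a w).2 = 0.
Proof. by move=> w2; rewrite /Fop HN_add2 HN_opp2 HN_scale2 w2 scaler0 subr0. Qed.

Section Core.
Variable le : rel 'rV[int]_(m + m).
Hypothesis le_tot : total le.
Hypothesis le_tr : forall a b c, le a b -> le b c -> le a c.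
Hypothesis le_an : forall a b, le a b -> le b a -> a = b.
Hypothesis le_ad : forall a b c, le a b -> le (a + c) (b + c).

Lemma le_rf a : le a a. Proof. by have := le_tot a a; rewrite orbb. Qed.

Lemma le_ad_l a b c : le a b -> le (c + a) (c + b).
Proof. by move/(le_ad c); rewrite ![c + _]addrC. Qed.

Variables (x : H) (kr : key).
Hypothesis krin : kr \in msupp x.1.
Hypothesis krmax : forall a, a \in msupp x.1 -> le (val a) (val kr).
Hypothesis kr0 : le 0 (val kr).

Let R := val kr.
Lemma R_neq0 : R != 0. Proof. by rewrite /R; case: kr. Qed.

Let t0 := if le 0 (rbar R) then rbar R else - rbar R.

Lemma t_ge0 : le 0 t0.
Proof.
rewrite /t0; case: ifP => // /negbT h.
have : le (rbar R) 0 by case/orP: (le_tot (rbar R) 0) => //; rewrite (negbTE h).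
by move/(le_ad (- rbar R)); rewrite subrr add0r.
Qed.

Lemma t_neq0 : t0 != 0.
Proof. by rewrite /t0; case: ifP; rewrite ?oppr_eq0 rbar_neq0 // R_neq0. Qed.

Lemma t_form : bform (rbar R) t0 != 0.
Proof.
rewrite /t0; case: ifP => _; rewrite ?bformNr ?oppr_eq0 bform_self_neq0 //;
  exact: rbar_neq0 R_neq0.
Qed.

Let pp n := t0 + R *+ n.

Lemma pp_S n : pp n.+1 = pp n + R.
Proof. by rewrite /pp mulrSr addrA. Qed.

Lemma pp_ge0 n : le 0 (pp n).
Proof.
elim: n => [|n IH]; first by rewrite /pp mulr0n addr0 t_ge0.
rewrite pp_S; apply: (le_tr kr0).
by move: (le_ad R IH); rewrite add0r.
Qed.

Lemma pp_le n : le (pp n) (pp n.+1).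
Proof. by rewrite pp_S; move: (le_ad_l (pp n) kr0); rewrite addr0. Qed.

Lemma pp_neq n : pp n != pp n.+1.
Proof.
rewrite pp_S; apply/eqP => /(congr1 (fun v => v - pp n)).
rewrite subrr addrC addKr => /eqP; rewrite eq_sym; apply/negP; exact: R_neq0.
Qed.

Lemma pp_neq0 n : pp n != 0.
Proof.
case: n => [|n]; first by rewrite /pp mulr0n addr0 t_neq0.
apply/eqP => e; have h1 := pp_le n; rewrite e in h1.
have := le_an h1 (pp_ge0 n) => e2.
by move: e; rewrite pp_S e2 add0r => /eqP; apply/negP; exact: R_neq0.
Qed.

Lemma pp_form n : bform (rbar R) (pp n) = bform (rbar R) t0.
Proof. by rewrite /pp bformDr bformMnr bform_rbar_self mul0rn addr0. Qed.

Definition Inv n (w : H) : Prop :=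
  [/\ w.2 = 0,
      (forall q : key, le (pp n) (val q) -> val q != pp n -> w.1@_q = 0) &
      (forall q : key, val q = pp n -> w.1@_q != 0)].

Definition kt : key := Sub t0 t_neq0.

Lemma Inv0 : Inv 0 (<< kt >>, 0).
Proof.
have p0 : pp 0 = t0 by rewrite /pp mulr0n addr0.
split => //= q; rewrite p0 mcoeffU.
  move=> _ ne; case: eqP => [e|]; last by rewrite mulr0n.
  by move: ne; rewrite -e /kt SubK eqxx.
move=> e; have -> : kt = q by apply: val_inj; rewrite /kt SubK; symmetry; exact: e.
by rewrite eqxx mulr1n oner_neq0.
Qed.

Lemma Inv_step n w a : Inv n w -> Inv n.+1 (Fop x a w).
Proof.
case=> w2 wi wii.
have wle : forall b, b \in msupp w.1 -> le (val b) (pp n).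
  move=> b bin; case/orP: (le_tot (val b) (pp n)) => // h.
  case: (eqVneq (val b) (pp n)) => [->|ne]; first exact: le_rf.
  by move: bin; rewrite -mcoeff_neq0 wi ?eqxx.
have kf : forall q a0 b : key, a0 \in msupp x.1 -> b \in msupp w.1 ->
    le (pp n.+1) (val q) -> val q = val a0 + val b -> a0 = kr /\ val b = pp n.
  move=> q a' b ain bin hq e.
  have h1 : le (val a' + val b) (R + val b) by apply: le_ad; exact: krmax.
  have h2 : le (R + val b) (pp n.+1) by rewrite pp_S [pp n + R]addrC; apply: le_ad_l; exact: wle.
  have h3 : le (pp n.+1) (val a' + val b) by rewrite -e.
  have e1 : val a' + val b = R + val b by apply: le_an => //; exact: le_tr h2 h3.
  have e2 : R + val b = pp n.+1 by apply: le_an => //; exact: le_tr h3 h1.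
  split; first by apply: val_inj; exact: (addIr (val b) e1).
  by apply: (addrI R); rewrite e2 pp_S addrC.
have wq : forall q : key, le (pp n.+1) (val q) -> w.1@_q = 0.
  move=> q hq; apply: wi; first exact: le_tr (pp_le n) hq.
  apply/eqP => e; move: hq; rewrite e => hq.
  by move/eqP: (pp_neq n); apply; apply: le_an => //; exact: pp_le.
have coefE : forall q : key, le (pp n.+1) (val q) -> (Fop x a w).1@_q =
    \sum_(a0 <- msupp x.1) \sum_(b <- msupp w.1)
     x.1@_a0 * w.1@_b * (bform (rbar (val a0)) (val b))%:~R * (val q == val a0 + val b)%:R.
  move=> q hq; rewrite Fop_coef HNbr_coef w2 bform0l wq //.
  by rewrite !(mulr0, mul0r, addr0, subr0).
split; first exact: Fop_2.
  move=> q hq ne; rewrite coefE //; apply: big1_seq => a0 /andP[_ ain].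
  apply: big1_seq => b /andP[_ bin].
  case: eqP => [e|]; last by rewrite mulr0.
  have [ea eb] := kf q a0 b ain bin hq e.
  by move: ne; rewrite e ea eb -/R pp_S addrC eqxx.
move=> q e; have hq : le (pp n.+1) (val q) by rewrite e le_rf.
rewrite coefE //.
pose kn : key := Sub (pp n) (pp_neq0 n).
have knin : kn \in msupp w.1 by rewrite -mcoeff_neq0 wii // /kn SubK.
rewrite (bigD1_seq kr) ?fset_uniq //=.
rewrite [X in _ + X](_ : _ = 0) ?addr0; last first.
  apply: big1_seq => a0 /andP[ne ain]; apply: big1_seq => b /andP[_ bin].
  case: eqP => [e'|]; last by rewrite mulr0.
  by have [ea _] := kf q a0 b ain bin hq e'; rewrite ea eqxx in ne.
rewrite (bigD1_seq kn) ?fset_uniq //=.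
rewrite [X in _ + X](_ : _ = 0) ?addr0; last first.
  apply: big1_seq => b /andP[ne bin].
  case: eqP => [e'|]; last by rewrite mulr0.
  have [_ eb] := kf q kr b krin bin hq e'.
  have bkn : b = kn by apply: val_inj; rewrite eb /kn SubK.
  by move: ne; rewrite bkn => /negP H; exfalso; apply: H; apply/eqP.
have E2 : pp n.+1 = val kr + pp n by rewrite pp_S addrC.
rewrite (_ : (sval q == sval kr + pp n) = true); last by apply/eqP; exact: etrans e E2.
rewrite mulr1.
rewrite !mulf_neq0 //; first by rewrite mcoeff_neq0.
  by apply: wii; rewrite /kn SubK.
by rewrite pp_form intr_neq0_char0 // t_form.
Qed.

Lemma Inv_all l : Inv (size l) (foldr (Fop x) (<< kt >>, 0) l).
Proof.
elim: l => [|a l IH]; first exact: Inv0.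
rewrite foldr_cons_eq; exact: Inv_step.
Qed.

Lemma core_notLF : ~ LF x.
Proof.
move=> /(_ (<< kt >>, 0)) [l hl].
have [_ _ ii] := Inv_all l.
have := ii (Sub (pp (size l)) (pp_neq0 _)); rewrite SubK hl HN_zero1 mcoeff0 eqxx.
by move/(_ erefl).
Qed.
End Core.

End S.

Lemma exists_max (T : choiceType) (V : Type) (f : T -> V) (le : rel V)
  (tot : total le) (tr : forall a b c, le a b -> le b c -> le a c)
  (A : {fset T}) (k0 : T) : k0 \in A ->
  exists2 k, k \in A & forall a, a \in A -> le (f a) (f k).
Proof.
have refl a : le a a by have := tot a a; rewrite orbb.
have : forall s : seq T, s != [::] -> exists2 k, k \in s & forall a, a \in s -> le (f a) (f k).
  elim=> // a s IH _; case: s IH => [|b s] IH.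
    by exists a; rewrite ?inE ?eqxx // => c; rewrite inE => /eqP ->.
  have [k ks kmax] := IH isT.
  case/orP: (tot (f a) (f k)) => h.
    exists k; first by rewrite inE ks orbT.
    by move=> c; rewrite inE => /orP [/eqP ->|/kmax].
  exists a; first by rewrite inE eqxx.
  by move=> c; rewrite inE => /orP [/eqP ->|/kmax ck]; [exact: refl|exact: tr ck h].
move=> H kA; apply: H; have : k0 \in (A : seq T) := kA; by case: (A : seq T).
Qed.

Lemma notLF (K : fieldType) (charK0 : [pchar K] =i pred0) m (x : HN K m) :
  x.1 != 0 -> ~ LF x.
Proof.
move=> x1.
have [k0 k0in] : exists k, k \in msupp x.1.
  apply/fset0Pn; apply: contra x1 => /eqP e; apply/eqP; rewrite (monalgE x.1) e. by rewrite big_seq_fset0.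
have [kr krin krmax] := exists_max (fun k : nzkey m => val k) (@lex_total _) (@lex_trans _) k0in.
case: (boolP (lexle 0 (val kr))) => h0.
  apply: (core_notLF charK0 (@lex_total _) (@lex_trans _) (@lex_anti _) (@lex_add _) krin krmax h0).
pose le' := fun a b : 'rV[int]_(m + m) => lexle b a.
have tot' : total le' by move=> a b; rewrite /le' orbC lex_total.
have tr' : forall a b c, le' a b -> le' b c -> le' a c.
  by move=> a b c h1 h2; exact: lex_trans h2 h1.
have an' : forall a b, le' a b -> le' b a -> a = b.
  by move=> a b h1 h2; exact: lex_anti h2 h1.
have ad' : forall a b c, le' a b -> le' (a + c) (b + c).
  by move=> a b c; exact: lex_add.
have [kr' krin' krmax'] := exists_max (fun k : nzkey m => val k) tot' tr' k0in.
apply: (core_notLF charK0 tot' tr' an' ad' krin' krmax').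
have h1 : lexle (val kr') (val kr) := krmax' _ krin.
have h2 : lexle (val kr) 0 by case/orP: (lex_total (val kr) 0) => //; rewrite (negbTE h0).
exact: lex_trans h1 h2.
Qed.

Theorem lemma3p5 (K : closedFieldType) (charK0 : [pchar K] =i pred0)
    (m : nat) (hm : (0 < m)%N) (sigma : HN K m -> HN K m) :
  is_HN_aut sigma ->
  maps_onto sigma (@HNder K m) /\ maps_onto sigma (@HNcartan K m).
Proof.
case=> lin [g sg gs] br.
have hs : hom sigma by split.
have hg : hom g := inv_hom hs sg gs.
have cart : forall s t : HN K m -> HN K m, hom s -> cancel t s ->
    forall x : HN K m, x.1 = 0 -> (s x).1 = 0.
  move=> s t hs' ts x x1.
  have LFx : LF (s x).
    apply: (LF_transport hs' ts).
    have -> : x = (0, x.2) by move: x1; case: x => a u /= ->.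
    exact: LF_cartan.
  by apply/eqP; apply: contraPT LFx => h; exact: (notLF charK0 h).
split; split.
- move=> x /eqP h. apply/eqP. exact: (der_pres charK0 hs h).
- move=> y /eqP hy; exists (g y); last exact: gs.
  apply/eqP; exact: (der_pres charK0 hg hy).
- move=> x /eqP h; apply/eqP; exact: (cart _ _ hs gs x h).
- move=> y /eqP hy; exists (g y); last exact: gs.
  apply/eqP; exact: (cart _ _ hg sg y hy).
Qed.
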